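(* A set of representatives for the double cosets $\mathcal{B}\backslash\mathcal{K}/\mathcal{B}$ is $$\left\{\begin{pmatrix}1&0\\0&1\end{pmatrix},\ \begin{pmatrix}0&1\\1&0\end{pmatrix},\ \begin{pmatrix}1&0\\ \sqrt\epsilon\,\varpi^k&1\end{pmatrix}\ \middle|\ k\ge1\right\}.$$
   Context: Let $F$ be a non-archimedean local field with odd residual characteristic, ring of integers $\mathcal{O}_F$, uniformizer $\varpi$. Fix a non-square $\epsilon\in\mathcal{O}_F^\times$, $E=F[\sqrt\epsilon]$ with ring of integers $\mathcal{O}_E$; $\overline{x}$ is Galois conjugation. $G=\{g\in\mathrm{GL}_2(E):\overline{g}^{\top}\mathrm{w}g=\mathrm{w}\}$ with $\mathrm{w}=\begin{pmatrix}0&1\\1&0\end{pmatrix}$, $\mathcal{K}=G\cap M_2(\mathcal{O}_E)$, $B$ the subgroup of upper triangular matrices in $G$, and $\mathcal{B}=B\cap\mathcal{K}$. *)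

(* Defs.v *)
From HB Require Import structures.
From mathcomp Require Import all_boot all_order all_algebra.
Set Implicit Arguments. Unset Strict Implicit. Unset Printing Implicit Defensive.
Import Order.TTheory GRing.Theory Num.Theory.
Local Open Scope ring_scope.

(* A discrete valuation v : F^x -> Z, normalized (surjective); the value v 0
   is irrelevant (junk) and never used. *)
Section LocalField.
Variable F : fieldType.
Variable v : F -> int.

Definition is_normalized_discrete_valuation : Prop :=
  [/\ (forall x y : F, x != 0 -> y != 0 -> v (x * y) = v x + v y),
      (forall x y : F, x != 0 -> y != 0 -> x + y != 0 ->
          Num.min (v x) (v y) <= v (x + y)) &
      (exists x : F, x != 0 /\ v x = 1)].

(* x is "N-close to 0": |x| <= q^{-N} *)
Definition vge (N : int) (x : F) : Prop := x = 0 \/ N <= v x.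

Definition inO (x : F) : Prop := vge 0 x.
Definition inP (x : F) : Prop := vge 1 x.

Definition cauchy_seq (u : nat -> F) : Prop :=
  forall N : int, exists n0 : nat, forall m n : nat,
    (n0 <= m)%N -> (n0 <= n)%N -> vge N (u m - u n).

Definition converges_to (u : nat -> F) (l : F) : Prop :=
  forall N : int, exists n0 : nat, forall n : nat, (n0 <= n)%N -> vge N (u n - l).

Definition complete_valued : Prop :=
  forall u : nat -> F, cauchy_seq u -> exists l : F, converges_to u l.

Definition finite_residue_field : Prop :=
  exists s : seq F, (forall y, y \in s -> inO y) /\
    forall x, inO x -> exists2 y, y \in s & inP (x - y).

Definition nonarch_local_field : Prop :=
  [/\ is_normalized_discrete_valuation, complete_valued & finite_residue_field].

(* residual characteristic is odd  <->  2 is not in the maximal ideal *)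
Definition odd_residual_char : Prop := ~ inP 2.

Definition uniformizer (w : F) : Prop := w != 0 /\ v w = 1.

End LocalField.

(* An element (a, b) : F * F stands for a + b sqrt(eps). *)
Section Unitary.
Variable F : fieldType.
Variable eps : F.

Definition Eelt := (F * F)%type.
Definition ezero : Eelt := (0, 0).
Definition eone : Eelt := (1, 0).
Definition eadd (x y : Eelt) : Eelt := (x.1 + y.1, x.2 + y.2).
Definition eopp (x : Eelt) : Eelt := (- x.1, - x.2).
Definition emul (x y : Eelt) : Eelt :=
  (x.1 * y.1 + eps * (x.2 * y.2), x.1 * y.2 + x.2 * y.1).
Definition econj (x : Eelt) : Eelt := (x.1, - x.2).

Record M2 := mkM2 { m11 : Eelt; m12 : Eelt; m21 : Eelt; m22 : Eelt }.

Definition mmul (A B : M2) : M2 :=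
  mkM2 (eadd (emul (m11 A) (m11 B)) (emul (m12 A) (m21 B)))
       (eadd (emul (m11 A) (m12 B)) (emul (m12 A) (m22 B)))
       (eadd (emul (m21 A) (m11 B)) (emul (m22 A) (m21 B)))
       (eadd (emul (m21 A) (m12 B)) (emul (m22 A) (m22 B))).

Definition mstar (A : M2) : M2 :=
  mkM2 (econj (m11 A)) (econj (m21 A)) (econj (m12 A)) (econj (m22 A)).

Definition mdet (A : M2) : Eelt :=
  eadd (emul (m11 A) (m22 A)) (eopp (emul (m12 A) (m21 A))).

Definition mid : M2 := mkM2 eone ezero ezero eone.
Definition mw : M2 := mkM2 ezero eone eone ezero.

Definition inG (g : M2) : Prop := mdet g <> ezero /\ mmul (mmul (mstar g) mw) g = mw.

Variable v : F -> int.
(* O_E = O_F[sqrt eps] (E/F unramified since eps is a non-square unit) *)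
Definition inOE (x : Eelt) : Prop := inO v x.1 /\ inO v x.2.

Definition inK (g : M2) : Prop :=
  inG g /\ [/\ inOE (m11 g), inOE (m12 g), inOE (m21 g) & inOE (m22 g)].

Definition inBB (g : M2) : Prop := inK g /\ m21 g = ezero.

Inductive rep_idx := RepI | RepW | RepK of nat (* RepK n  <->  k = n+1 >= 1 *).

Definition rep (varpi : F) (i : rep_idx) : M2 :=
  match i with
  | RepI => mid
  | RepW => mw
  | RepK n => mkM2 eone ezero (0, varpi ^+ n.+1) eone  (* sqrt(eps) varpi^k *)
  end.

Definition double_coset_reps (r : rep_idx -> M2) : Prop :=
  [/\ (forall i, inK (r i)),
      (forall g, inK g -> exists i b1 b2,
          [/\ inBB b1, inBB b2 & g = mmul (mmul b1 (r i)) b2]) &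
      (forall i j b1 b2, inBB b1 -> inBB b2 ->
          r j = mmul (mmul b1 (r i)) b2 -> i = j)].

End Unitary.

(* Main.v *)
Require Import Defs.
From HB Require Import structures.
From mathcomp Require Import all_boot all_order all_algebra.
From mathcomp Require Import ring lra zify.
From Stdlib Require Import ClassicalEpsilon.
Set Implicit Arguments. Unset Strict Implicit. Unset Printing Implicit Defensive.
Import Order.TTheory GRing.Theory Num.Theory.
Local Open Scope ring_scope.

Section Val.
Variable F : fieldType.
Variable v : F -> int.
Hypothesis hv : is_normalized_discrete_valuation v.

Lemma vM x y : x != 0 -> y != 0 -> v (x * y) = v x + v y.
Proof. by case: hv => h1 h2 _; apply: h1. Qed.

Lemma v1 : v 1 = 0.
Proof. have := vM (oner_neq0 F) (oner_neq0 F). rewrite mulr1 => h. have := congr1 (fun z => z - v 1) h. rewrite subrr addrK. by move=> <-. Qed.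

Lemma vN1 : v (-1) = 0.
Proof.
have h : (-1 : F) != 0 by rewrite oppr_eq0 oner_neq0.
have := vM h h. rewrite mulrNN mulr1 v1. lia.
Qed.

Lemma vN x : v (- x) = v x.
Proof.
case: (eqVneq x 0) => [->|hx]; first by rewrite oppr0.
have h : (-1 : F) != 0 by rewrite oppr_eq0 oner_neq0.
by rewrite -mulN1r vM // vN1 add0r.
Qed.

Lemma vV x : x != 0 -> v (x^-1) = - v x.
Proof.
move=> hx. have := vM hx (invr_neq0 hx). rewrite mulfV // v1. lia.
Qed.

Lemma vX x n : x != 0 -> v (x ^+ n) = (n%:Z * v x).
Proof.
move=> hx; elim: n => [|n IH]; first by rewrite expr0 v1 mul0r.
rewrite exprS vM ?expf_neq0 // IH. rewrite intS mulrDl mul1r. done.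
Qed.

Lemma vD x y : x != 0 -> y != 0 -> x + y != 0 -> Num.min (v x) (v y) <= v (x + y).
Proof. by case: hv => h1 h2 _; apply: h2. Qed.

Lemma vgeD N x y : vge v N x -> vge v N y -> vge v N (x + y).
Proof.
rewrite /vge.
case: (eqVneq x 0) => [-> _|hx]; first by rewrite add0r.
case: (eqVneq y 0) => [-> h _|hy]; first by rewrite addr0.
case: (eqVneq (x + y) 0) => [->|hxy]; first by left.
case=> [h0|h1]; first by rewrite h0 eqxx in hx.
case=> [h0|h2]; first by rewrite h0 eqxx in hy.
right.
apply: le_trans (vD hx hy hxy). by rewrite le_min h1 h2.
Qed.

Lemma vgeN N x : vge v N x -> vge v N (- x).
Proof. by rewrite /vge vN; case=> [->|h]; [left; rewrite oppr0|right]. Qed.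

Lemma vgeB N x y : vge v N x -> vge v N y -> vge v N (x - y).
Proof. by move=> h1 h2; apply: vgeD => //; apply: vgeN. Qed.

Lemma vgeM N M x y : vge v N x -> vge v M y -> vge v (N + M) (x * y).
Proof.
rewrite /vge. case=> [->|h1]; first by rewrite mul0r; left.
case=> [->|h2]; first by rewrite mulr0; left.
case: (eqVneq x 0) => [->|hx]; first by rewrite mul0r; left.
case: (eqVneq y 0) => [->|hy]; first by rewrite mulr0; left.
right; rewrite vM //. by apply: lerD.
Qed.

Lemma vgeW N M x : M <= N -> vge v N x -> vge v M x.
Proof. by move=> hMN [->|h]; [left|right; apply: le_trans h]. Qed.

Lemma vge0 N : vge v N 0.
Proof. by left. Qed.

Lemma vge_nz N x : x != 0 -> vge v N x -> N <= v x.
Proof. by move=> hx [h|//]; rewrite h eqxx in hx. Qed.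

End Val.

Lemma pair_eqE (F : Type) (x y : F * F) : x.1 = y.1 -> x.2 = y.2 -> x = y.
Proof. by case: x y => [? ?] [? ?] /= -> ->. Qed.

Lemma M2_eqE (F : fieldType) (A B : M2 F) :
  m11 A = m11 B -> m12 A = m12 B -> m21 A = m21 B -> m22 A = m22 B -> A = B.
Proof. by case: A B => ? ? ? ? [? ? ? ?] /= -> -> -> ->. Qed.

Ltac pdest := repeat match goal with
  | x : Eelt _ |- _ => destruct x
  | x : (_ * _)%type |- _ => destruct x
  | A : M2 _ |- _ => destruct A
  end.

Section Ealg.
Variable F : fieldType.
Variable eps : F.
Hypothesis h2 : (2 : F) != 0.

Definition Geq (a b c d : Eelt F) : Prop :=
  [/\ a.1*c.1 - eps*(a.2*c.2) = 0,
      b.1*d.1 - eps*(b.2*d.2) = 0,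
      a.1*d.1 - eps*(a.2*d.2) + (c.1*b.1 - eps*(c.2*b.2)) - 1 = 0 &
      a.1*d.2 - a.2*d.1 + (c.1*b.2 - c.2*b.1) = 0].

Lemma lc1 (p q e k : F) : p - q = k * e -> e = 0 -> p = q.
Proof. by move=> h he; apply/eqP; rewrite -subr_eq0 h he mulr0. Qed.

Lemma lc2 (p q e1 e2 k1 k2 : F) : p - q = k1 * e1 + k2 * e2 -> e1 = 0 -> e2 = 0 -> p = q.
Proof. by move=> h he1 he2; apply/eqP; rewrite -subr_eq0 h he1 he2 !mulr0 addr0. Qed.

Lemma mdetM A B : mdet eps (mmul eps A B) = emul eps (mdet eps A) (mdet eps B).
Proof. pdest; apply: pair_eqE; rewrite /= ; ring. Qed.

Lemma mdet_neq0 g : mmul eps (mmul eps (mstar g) (mw F)) g = mw F -> mdet eps g <> ezero F.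
Proof.
move=> /(congr1 (mdet eps)); rewrite !mdetM => H hd.
move: H; rewrite hd => /(congr1 fst) /=.
rewrite /mdet /emul /ezero /eadd /eopp /= => /eqP.
by rewrite !(mulr0, mul0r, addr0, add0r, oppr0, subr0) mulr1 eq_sym oppr_eq0 oner_eq0.
Qed.

Lemma mul2_eq0 (x : F) : 2 * x = 0 -> x = 0.
Proof. by move/eqP; rewrite mulf_eq0 (negbTE h2) /= => /eqP. Qed.

Lemma inG_Geq a b c d : inG eps (mkM2 a b c d) <-> Geq a b c d.
Proof.
split.
  case=> _; case: a b c d => [a1 a2] [b1 b2] [c1 c2] [d1 d2].
  rewrite /mmul /mstar /mw /emul /eadd /econj /ezero /eone /= => -[e1 e2 e3 e4 e5 e6 e7 e8].
  split => /=.
  - apply: mul2_eq0; rewrite -e1; ring.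
  - apply: mul2_eq0; rewrite -e7; ring.
  - by apply/eqP; rewrite subr_eq0 -e3; apply/eqP; ring.
  - rewrite -e4; ring.
case: a b c d => [a1 a2] [b1 b2] [c1 c2] [d1 d2] [/= g1 g2 g3 g4].
have H : mmul eps (mmul eps (mstar (mkM2 (a1, a2) (b1, b2) (c1, c2) (d1, d2))) (mw F))
    (mkM2 (a1, a2) (b1, b2) (c1, c2) (d1, d2)) = mw F.
  apply: M2_eqE; apply: pair_eqE; rewrite /=.
  - by apply: (lc1 (k := 2) _ g1); ring.
  - ring.
  - by apply: (lc1 (k := 1) _ g3); ring.
  - by apply: (lc1 (k := 1) _ g4); ring.
  - by apply: (lc1 (k := 1) _ g3); ring.
  - by apply: (lc1 (k := -1) _ g4); ring.
  - by apply: (lc1 (k := 2) _ g2); ring.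
  - ring.
by split=> //; apply: mdet_neq0.
Qed.

Lemma mmulA A B C : mmul eps A (mmul eps B C) = mmul eps (mmul eps A B) C.
Proof. pdest; apply: M2_eqE; apply: pair_eqE; rewrite /=; ring. Qed.

Lemma mstarM A B : mstar (mmul eps A B) = mmul eps (mstar B) (mstar A).
Proof. pdest; apply: M2_eqE; apply: pair_eqE; rewrite /=; ring. Qed.

Lemma inG_mul A B : inG eps A -> inG eps B -> inG eps (mmul eps A B).
Proof.
move=> [_ hA] [_ hB].
have H : mmul eps (mmul eps (mstar (mmul eps A B)) (mw F)) (mmul eps A B) = mw F.
  rewrite mstarM.
  have -> : mmul eps (mmul eps (mmul eps (mstar B) (mstar A)) (mw F)) (mmul eps A B) =
     mmul eps (mmul eps (mstar B) (mmul eps (mmul eps (mstar A) (mw F)) A)) B by rewrite !mmulA.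
  by rewrite hA hB.
by split=> //; apply: mdet_neq0.
Qed.

End Ealg.

Section Main.
Variable F : fieldType.
Variable v : F -> int.
Hypothesis hv : is_normalized_discrete_valuation v.
Variable eps : F.
Hypothesis heps0 : eps != 0.
Hypothesis hveps : v eps = 0.
Hypothesis hns : forall x : F, x * x != eps.
Hypothesis h2 : (2 : F) != 0.
Variable varpi : F.
Hypothesis hvarpi : uniformizer v varpi.

Local Notation inO := (inO v).
Local Notation inP := (inP v).
Local Notation vge := (vge v).
Local Notation inOE := (inOE v).
Local Notation inK := (inK eps v).
Local Notation inBB := (inBB eps v).
Local Notation mmul := (mmul eps).
Local Notation emul := (emul eps).

Lemma inO0 : inO 0. Proof. by left. Qed.
Lemma inO1 : inO 1. Proof. by right; rewrite v1. Qed.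
Lemma inOD x y : inO x -> inO y -> inO (x + y). Proof. exact: vgeD. Qed.
Lemma inON x : inO x -> inO (- x). Proof. exact: vgeN. Qed.
Lemma inOB x y : inO x -> inO y -> inO (x - y). Proof. exact: vgeB. Qed.
Lemma inOM x y : inO x -> inO y -> inO (x * y).
Proof. by move=> h1 h2'; have := vgeM hv h1 h2'; rewrite addr0. Qed.
Lemma inO_eps : inO eps. Proof. by right; rewrite hveps. Qed.
Lemma inO_varpi : inO varpi. Proof. by right; case: hvarpi => _ ->. Qed.
Lemma inOX x n : inO x -> inO (x ^+ n).
Proof. by move=> hx; elim: n => [|n IH]; [rewrite expr0; exact: inO1|rewrite exprS; exact: inOM]. Qed.

Definition unitO (x : F) := x != 0 /\ v x = 0.

Lemma inO_cases x : inO x -> unitO x \/ inP x.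
Proof.
case=> [->|h]; first by right; left.
case: (eqVneq x 0) => [->|hx]; first by right; left.
case: (ltrgtP (v x) 0) => [hlt|hgt|heq].
- by move: (lt_le_trans hlt h); rewrite ltxx.
- by right; right.
- by left.
Qed.

Lemma unitO_inv x : unitO x -> inO (x^-1).
Proof. by case=> hx h0; right; rewrite vV // h0 oppr0. Qed.

Lemma unitO_inO x : unitO x -> inO x.
Proof. by case=> _ h; right; rewrite h. Qed.

Lemma unitO_notP x : unitO x -> ~ inP x.
Proof. by case=> hx h0 [h|h]; [rewrite h eqxx in hx|rewrite h0 in h]. Qed.

Lemma inOE_mul x y : inOE x -> inOE y -> inOE (emul x y).
Proof.
case: x y => [x1 x2] [y1 y2] [/= hx1 hx2] [/= hy1 hy2]; split => /=.
  by apply: inOD; [apply: inOM|apply: inOM; [apply: inO_eps|apply: inOM]].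
by apply: inOD; apply: inOM.
Qed.

Lemma inOE_add x y : inOE x -> inOE y -> inOE (eadd x y).
Proof. by case: x y => [x1 x2] [y1 y2] [/= ? ?] [/= ? ?]; split; apply: inOD. Qed.

Lemma inK_mul A B : inK A -> inK B -> inK (mmul A B).
Proof.
case=> hA [a1 a2 a3 a4] [hB [b1 b2 b3 b4]]; split; first exact: inG_mul.
by split; rewrite /=; apply: inOE_add; apply: inOE_mul.
Qed.

Lemma inBB_mul A B : inBB A -> inBB B -> inBB (mmul A B).
Proof.
case=> hA hA0 [hB hB0]; split; first exact: inK_mul.
move: hA0 hB0; case: A {hA} => [a b c d]; case: B {hB} => [a' b' c' d'] /= -> ->.
by apply: pair_eqE; rewrite /=; ring.
Qed.

Definition normE (x : Eelt F) : F := x.1 * x.1 - eps * (x.2 * x.2).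

Lemma normEM x y : normE (emul x y) = normE x * normE y.
Proof. case: x y => [? ?] [? ?]; rewrite /normE /=; ring. Qed.

Lemma normE_eq0 x : normE x = 0 -> x = ezero F.
Proof.
case: x => [x1 x2]; rewrite /normE /= => h.
case: (eqVneq x2 0) => [hx2|hx2].
  move: h; rewrite hx2 mulr0 mulr0 subr0 => /eqP; rewrite mulf_eq0 orbb => /eqP ->.
  by [].
have e : x1 / x2 * (x1 / x2) = eps.
  have hx : x2 * x2 != 0 by rewrite mulf_neq0.
  apply: (mulIf hx); rewrite -[RHS]addr0 -h; field; done.
by move: (hns (x1 / x2)); rewrite e eqxx.
Qed.

Lemma inO_normE x : inOE x -> inO (normE x).
Proof.
case: x => [x1 x2] [/= hx1 hx2]; rewrite /normE /=.
by apply: inOB; [apply: inOM|apply: inOM; [apply: inO_eps|apply: inOM]].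
Qed.

Lemma inPM x y : inP x -> inO y -> inP (x * y).
Proof. by move=> h1 h2'; have := vgeM hv h1 h2'; rewrite addr0. Qed.

Lemma inP_inO x : inP x -> inO x.
Proof. by apply: vgeW. Qed.

Lemma not_inP1 : ~ inP 1.
Proof. by case=> [/eqP|]; [rewrite oner_eq0|rewrite v1]. Qed.

Lemma unit_prod1 x y : inO x -> inO y -> x * y = 1 -> unitO x.
Proof.
move=> hx hy hxy.
have hx0 : x != 0 by apply/eqP => h; move: hxy; rewrite h mul0r => /eqP; rewrite eq_sym oner_eq0.
have hy0 : y != 0 by apply/eqP => h; move: hxy; rewrite h mulr0 => /eqP; rewrite eq_sym oner_eq0.
have := vM hv hx0 hy0; rewrite hxy (v1 hv).
have := vge_nz hx0 hx; have := vge_nz hy0 hy.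
move=> k1 k2 k3; split => //; lia.
Qed.

Lemma inBB_norm B : inBB B -> unitO (normE (m11 B)) /\ unitO (normE (m22 B)).
Proof.
case=> [[hG [ha hb hc hd]] h0]; move: hG ha hb hc hd.
case: B h0 => a b c d /= ->.
rewrite inG_Geq //; case: a b d => [a1 a2] [b1 b2] [d1 d2] [/= _ _ g3 g4] ha _ _ hd.
have e : normE (a1, a2) * normE (d1, d2) = 1.
  have e3 : a1 * d1 - eps * (a2 * d2) = 1.
    by apply: (lc1 (k := 1) _ g3); ring.
  have e4 : a1 * d2 - a2 * d1 = 0 by apply: (lc1 (k := 1) _ g4); ring.
  have -> : normE (a1, a2) * normE (d1, d2) =
    (a1 * d1 - eps * (a2 * d2)) ^+ 2 - eps * (a1 * d2 - a2 * d1) ^+ 2 by rewrite /normE /=; ring.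
  by rewrite e3 e4; ring.
split; first by apply: unit_prod1 e; apply: inO_normE.
by rewrite mulrC in e; apply: unit_prod1 e; apply: inO_normE.
Qed.

Lemma m21_prod B1 R B2 : m21 B1 = ezero F -> m21 B2 = ezero F ->
  m21 (mmul (mmul B1 R) B2) = emul (emul (m22 B1) (m21 R)) (m11 B2).
Proof.
case: B1 B2 => a b c d [a' b' c' d'] /= -> ->.
by pdest; apply: pair_eqE; rewrite /=; ring.
Qed.

Definition nu (i : rep_idx) : F := normE (m21 (rep varpi i)).

Definition fnu (i : rep_idx) : int := if i is RepK m then (m.+1)%:Z * 2 else 0.

Lemma varpi_neq0 : varpi != 0. Proof. by case: hvarpi. Qed.

Lemma nu_nz i : i <> RepI -> nu i != 0 /\ v (nu i) = fnu i.
Proof.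
case: i => // [_|m _]; rewrite /nu /normE /=.
  by rewrite !(mulr0, mul0r, subr0, mulr1) oner_neq0 (v1 hv).
have hp : varpi ^+ m.+1 != 0 by rewrite expf_neq0 // varpi_neq0.
rewrite !(mulr0, mul0r, sub0r).
have hne : eps * (varpi ^+ m.+1 * varpi ^+ m.+1) != 0 by rewrite !mulf_neq0.
split; first by rewrite oppr_eq0.
rewrite (vN hv) !(vM hv) ?mulf_neq0 // hveps (vX hv) ?varpi_neq0 //; case: hvarpi => _ ->.
by rewrite /fnu; lia.
Qed.

Lemma nu_W : nu RepW != 0. Proof. by have [] := @nu_nz RepW. Qed.
Lemma nu_K m : nu (RepK m) != 0. Proof. by have [] := @nu_nz (RepK m). Qed.

Lemma rep_unique i j b1 b2 : inBB b1 -> inBB b2 ->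
  rep varpi j = mmul (mmul b1 (rep varpi i)) b2 -> i = j.
Proof.
move=> hb1 hb2 e.
have [_ u1] := inBB_norm hb1.
have [u2 _] := inBB_norm hb2.
have en : nu j = normE (m22 b1) * nu i * normE (m11 b2).
  rewrite /nu e m21_prod ?normEM //; [by case: hb1|by case: hb2].
case: (eqVneq (nu i) 0) => [hi|hi].
  have hj : nu j = 0 by rewrite en hi mulr0 mul0r.
  clear e en; case: i hi => [_|h|m h]; last 2 first.
  - by move: nu_W; rewrite h eqxx.
  - by move: (nu_K m); rewrite h eqxx.
  case: j hj => // [|m] hj.
  - by move: nu_W; rewrite hj eqxx.
  - by move: (nu_K m); rewrite hj eqxx.
have hiI : i <> RepI by move=> hI; rewrite hI /nu /normE /= !(mulr0, subr0) eqxx in hi.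
have [_ vi] := nu_nz hiI.
case: u1 => [n1 v1']; case: u2 => [n2 v2'].
have hjn : nu j != 0 by rewrite en !mulf_neq0.
have hjI : j <> RepI by move=> hI; rewrite hI /nu /normE /= !(mulr0, subr0) eqxx in hjn.
have [_ vj] := nu_nz hjI.
have : fnu i = fnu j by rewrite -vi -vj en !vM ?mulf_neq0 // v1' v2' add0r addr0.
move=> hf; clear e vi vj hi hjn en.
case: i hiI hf => [//|_|m _]; case: j hjI => [//|_|m' _] //= hf; try lia.
congr RepK; lia.
Qed.

Lemma inK_Geq a b c d : inOE a -> inOE b -> inOE c -> inOE d ->
  Geq eps a b c d -> inK (mkM2 a b c d).
Proof. by move=> ha hb hc hd hg; split; [apply/inG_Geq|split]. Qed.

Lemma inBB_up a b d : inOE a -> inOE b -> inOE d ->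
  Geq eps a b (ezero F) d -> inBB (mkM2 a b (ezero F) d).
Proof. by move=> ha hb hd hg; split => //; apply: inK_Geq => //; split; apply: inO0. Qed.

Lemma inOE00 : inOE (ezero F). Proof. by split; apply: inO0. Qed.
Lemma inOE10 : inOE (eone F). Proof. by split; [apply: inO1|apply: inO0]. Qed.
Lemma inOEp x y : inO x -> inO y -> inOE (x, y). Proof. by split. Qed.

Lemma mid_BB : inBB (mid F).
Proof. apply: inBB_up; try apply: inOE00; try apply: inOE10; split; rewrite /=; ring. Qed.

Lemma rep_inK i : inK (rep varpi i).
Proof.
case: i => [||m] /=.
- by case: mid_BB.
- apply: inK_Geq; try apply: inOE00; try apply: inOE10; split; rewrite /=; ring.
- apply: inK_Geq; try apply: inOE00; try apply: inOE10.
    by apply: inOEp; [apply: inO0|apply: inOX; apply: inO_varpi].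
  split; rewrite /=; ring.
Qed.

Definition Lm (y : Eelt F) := mkM2 (eone F) (ezero F) y (eone F).
Definition Um (y : Eelt F) := mkM2 (eone F) y (ezero F) (eone F).

Lemma LA (P g s : F) : g = 1 + eps * s * P -> g != 0 ->
  Lm (0, P / g) = mmul (mmul (Um (0, s)) (Lm (0, P)))
      (mmul (Um (0, - s / g)) (mkM2 (g^-1, 0) (ezero F) (ezero F) (g, 0))).
Proof.
move=> -> hg; apply: M2_eqE; apply: pair_eqE; rewrite /=; field; done.
Qed.

Lemma LB (x z w : F) : x * x - eps * (z * z) != 0 ->
  Lm (0, w) = mmul (mmul (mkM2 (x / (x * x - eps * (z * z)), - z / (x * x - eps * (z * z)))
                         (ezero F) (ezero F) (x, - z))
                   (Lm (0, w / (x * x - eps * (z * z)))))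
     (mkM2 (x, z) (ezero F) (ezero F) (x / (x * x - eps * (z * z)), z / (x * x - eps * (z * z)))).
Proof.
move=> hn; apply: M2_eqE; apply: pair_eqE; rewrite /=; field; done.
Qed.

Lemma LW (t : F) : t != 0 ->
  Lm (0, t) = mmul (mmul (Um (0, (eps * t)^-1)) (mw F))
                   (mkM2 (0, t) (eone F) (ezero F) (0, - (eps * t)^-1)).
Proof.
move=> ht; apply: M2_eqE; apply: pair_eqE; rewrite /=; (field; try by apply/andP) => //.
Qed.

Lemma lc3 (p q e1 e2 e3 k1 k2 k3 : F) : p - q = k1 * e1 + k2 * e2 + k3 * e3 ->
  e1 = 0 -> e2 = 0 -> e3 = 0 -> p = q.
Proof. by move=> h h1 h3 h4; apply/eqP; rewrite -subr_eq0 h h1 h3 h4 !mulr0 !addr0. Qed.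

Lemma inPD x y : inP x -> inP y -> inP (x + y). Proof. exact: vgeD. Qed.
Lemma inPB x y : inP x -> inP y -> inP (x - y). Proof. exact: vgeB. Qed.
Lemma inPN x : inP x -> inP (- x). Proof. exact: vgeN. Qed.
Lemma inPM' x y : inO x -> inP y -> inP (x * y).
Proof. by move=> h1 h2'; rewrite mulrC; apply: inPM. Qed.

Lemma inP_eps_sq x : inO x -> inP (eps * (x * x)) -> inP x.
Proof.
move=> hx hp; case: (inO_cases hx) => // -[hx0 hvx].
exfalso; apply: (unitO_notP _ hp); split; first by rewrite !mulf_neq0.
by rewrite !(vM hv) ?mulf_neq0 // hveps hvx.
Qed.

Lemma unit_addP u e : unitO u -> inP e -> unitO (u + e).
Proof.
move=> hu he; have hO : inO (u + e) by apply: inOD; [apply: unitO_inO|apply: inP_inO].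
case: (inO_cases hO) => // hp; exfalso; apply: (unitO_notP hu).
by have := inPB hp he; rewrite addrK.
Qed.

Lemma c_unit a1 a2 b1 b2 c1 c2 d1 d2 :
  inO a1 -> inO a2 -> inO b1 -> inO b2 -> inO c1 -> inO c2 -> inO d1 -> inO d2 ->
  Geq eps (a1, a2) (b1, b2) (c1, c2) (d1, d2) ->
  inP (normE (a1, a2)) -> unitO (normE (c1, c2)).
Proof.
move=> ha1 ha2 hb1 hb2 hc1 hc2 hd1 hd2 [/= g1 g2 g3 g4] hap.
case: (inO_cases (inO_normE (inOEp hc1 hc2))) => // hcp; exfalso.
set s := a1 * c2 - a2 * c1.
have hs : inO s by apply: inOB; apply: inOM.
have es : eps * (s * s) = - (normE (a1, a2) * normE (c1, c2)).
  by apply: (lc1 (k := a1 * c1 - eps * (a2 * c2)) _ g1); rewrite /s /normE /=; ring.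
have hsP : inP s.
  by apply: inP_eps_sq => //; rewrite es; apply: inPN; apply: inPM => //; apply: inP_inO.
have ea1 : a1 = normE (a1, a2) * d1 - s * (eps * b2).
  by apply: (lc3 (k1 := b1) (k2 := - a1) (k3 := - (eps * a2)) _ g1 g3 g4); rewrite /s /normE /=; ring.
have ea2 : a2 = normE (a1, a2) * d2 - s * b1.
  by apply: (lc3 (k1 := b2) (k2 := - a2) (k3 := - a1) _ g1 g3 g4); rewrite /s /normE /=; ring.
have ec1 : c1 = s * (eps * d2) + normE (c1, c2) * b1.
  by apply: (lc3 (k1 := d1) (k2 := - c1) (k3 := - (eps * c2)) _ g1 g3 g4); rewrite /s /normE /=; ring.
have ec2 : c2 = s * d1 + normE (c1, c2) * b2.
  by apply: (lc3 (k1 := d2) (k2 := - c2) (k3 := - c1) _ g1 g3 g4); rewrite /s /normE /=; ring.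
have pa1 : inP a1 by rewrite ea1; apply: inPB; apply: inPM => //; apply: inOM => //; apply: inO_eps.
have pa2 : inP a2 by rewrite ea2; apply: inPB; apply: inPM.
have pc1 : inP c1 by rewrite ec1; apply: inPD; apply: inPM => //; apply: inOM => //; apply: inO_eps.
have pc2 : inP c2 by rewrite ec2; apply: inPD; apply: inPM.
apply: not_inP1.
have -> : 1 = a1 * d1 - eps * (a2 * d2) + (c1 * b1 - eps * (c2 * b2)).
  by apply/eqP; rewrite eq_sym -subr_eq0; apply/eqP.
apply: inPD; apply: inPB.
- by apply: inPM.
- by apply: inPM'; [apply: inO_eps|apply: inPM].
- by apply: inPM.
- by apply: inPM'; [apply: inO_eps|apply: inPM].
Qed.

Lemma LK (x z t P n g s : F) : n = x * x - eps * (z * z) -> n != 0 ->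
  g = 1 + eps * s * P -> g != 0 -> t / n = P / g ->
  Lm (0, t) = mmul (mmul (mmul (mkM2 (x / n, - z / n) (ezero F) (ezero F) (x, - z)) (Um (0, s)))
                         (Lm (0, P)))
                   (mmul (mmul (Um (0, - s / g)) (mkM2 (g^-1, 0) (ezero F) (ezero F) (g, 0)))
                         (mkM2 (x, z) (ezero F) (ezero F) (x / n, z / n))).
Proof.
move=> hn hnz hg hgz ht; subst n.
by rewrite (LB t hnz) ht (LA hg hgz) !mmulA.
Qed.

Definition NAprop := forall u, unitO u -> forall k : nat,
  exists x z, [/\ inO x, inO z & vge k%:Z (x * x - eps * (z * z) - u)].

Lemma inBB_Um t : inO t -> inBB (Um (0, t)).
Proof.
move=> ht; apply: inBB_up; try apply: inOE10; first by apply: inOEp => //; apply: inO0.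
split; rewrite /=; ring.
Qed.

Lemma unitO_mul x y : unitO x -> unitO y -> unitO (x * y).
Proof. by case=> hx vx [hy vy]; split; [rewrite mulf_neq0|rewrite (vM hv) // vx vy addr0]. Qed.

Lemma unitO_invU x : unitO x -> unitO (x^-1).
Proof. by case=> hx vx; split; [rewrite invr_eq0|rewrite vV // vx oppr0]. Qed.

Lemma exists_dec (NA : NAprop) g : inK g -> exists i b1 b2,
  [/\ inBB b1, inBB b2 & g = mmul (mmul b1 (rep varpi i)) b2].
Proof.
case: g => [[a1 a2] [b1 b2] [c1 c2] [d1 d2]] [hG [[/= ha1 ha2] [/= hb1 hb2] [/= hc1 hc2] [/= hd1 hd2]]].
have hGe : Geq eps (a1, a2) (b1, b2) (c1, c2) (d1, d2) by apply/inG_Geq.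
case: hGe => /= g1 g2 g3 g4.
have hs : inO (a1 * c2 - a2 * c1) by apply: inOB; apply: inOM.
case: (inO_cases (inO_normE (inOEp ha1 ha2))) => [hau|hap]; last first.
  have hcu := c_unit ha1 ha2 hb1 hb2 hc1 hc2 hd1 hd2 (And4 g1 g2 g3 g4) hap.
  have [nc hnc] : exists nc, nc = normE (c1, c2) by eexists.
  rewrite -hnc in hcu; have hnc0 : nc != 0 by case: hcu.
  have [t ht] : exists t, t = - (a1 * c2 - a2 * c1) / nc by eexists.
  have htO : inO t by rewrite ht; apply: inOM; [apply: inON|apply: unitO_inv].
  have ea1 : a1 = eps * t * c2.
    apply: (lc1 (k := c1 / nc) _ g1); rewrite ht; move: hnc0; rewrite hnc /normE /= => hnc0.
    by field.
  have ea2 : a2 = t * c1.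
    apply: (lc1 (k := c2 / nc) _ g1); rewrite ht; move: hnc0; rewrite hnc /normE /= => hnc0.
    by field.
  exists RepW, (Um (0, t)), (mkM2 (c1, c2) (d1, d2) (ezero F) (b1 - eps * t * d2, b2 - t * d1)).
  split.
  - exact: inBB_Um.
  - apply: inBB_up; try apply: inOEp => //.
      by apply: inOB => //; apply: inOM => //; apply: inOM => //; apply: inO_eps.
      by apply: inOB => //; apply: inOM.
    rewrite ea1 ea2 in g3 g4.
    split; rewrite /=.
    + ring.
    + by apply: (lc1 (k := 1) _ g2); ring.
    + by apply: (lc1 (k := 1) _ g3); ring.
    + by apply: (lc1 (k := 1) _ g4); ring.
  - rewrite ea1 ea2; apply: M2_eqE; apply: pair_eqE; rewrite /=; ring.
have [na hna] : exists na, na = normE (a1, a2) by eexists.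
rewrite -hna in hau; have hna0 : na != 0 by case: hau.
have [t ht] : exists t, t = (a1 * c2 - a2 * c1) / na by eexists.
have htO : inO t by rewrite ht; apply: inOM => //; apply: unitO_inv.
have ec1 : c1 = eps * t * a2.
  apply: (lc1 (k := a1 / na) _ g1); rewrite ht; move: hna0; rewrite hna /normE /= => hna0.
  by field.
have ec2 : c2 = t * a1.
  apply: (lc1 (k := a2 / na) _ g1); rewrite ht; move: hna0; rewrite hna /normE /= => hna0.
  by field.
set U := mkM2 (a1, a2) (b1, b2) (ezero F) (d1 - eps * t * b2, d2 - t * b1).
have hU : inBB U.
  apply: inBB_up; try apply: inOEp => //.
    by apply: inOB => //; apply: inOM => //; apply: inOM => //; apply: inO_eps.
    by apply: inOB => //; apply: inOM.
  rewrite ec1 ec2 in g3 g4.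
  split; rewrite /=.
  + ring.
  + by apply: (lc1 (k := 1) _ g2); ring.
  + by apply: (lc1 (k := 1) _ g3); ring.
  + by apply: (lc1 (k := 1) _ g4); ring.
have -> : mkM2 (a1, a2) (b1, b2) (c1, c2) (d1, d2) = mmul (Lm (0, t)) U.
  by rewrite /U ec1 ec2; apply: M2_eqE; apply: pair_eqE; rewrite /=; ring.
case: (eqVneq t 0) => [t0|tn0].
  exists RepI, U, (mid F); split => //; first exact: mid_BB.
  by rewrite t0 /U; apply: M2_eqE; apply: pair_eqE; rewrite /=; ring.
case: (inO_cases htO) => [tu|tp].
  have het : unitO (eps * t) by apply: unitO_mul => //; split.
  exists RepW, (Um (0, (eps * t)^-1)),
    (mmul (mkM2 (0, t) (eone F) (ezero F) (0, - (eps * t)^-1)) U).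
  split.
  - by apply: inBB_Um; apply: unitO_inv.
  - apply: inBB_mul => //; apply: inBB_up.
    + by apply: inOEp => //; apply: inO0.
    + exact: inOE10.
    + by apply: inOEp; [apply: inO0|apply: inON; apply: unitO_inv].
    + by split; rewrite /=; (field; try by apply/andP) => //.
  - by rewrite (LW tn0) mmulA.
have vt := vge_nz tn0 tp.
have [m hm] : exists m : nat, v t = (m.+1)%:Z.
  move: vt; case: (v t) => [[|m]|n] //= _; by exists m.
have [P hP] : exists P, P = varpi ^+ m.+1 by eexists.
have hP0 : P != 0 by rewrite hP expf_neq0 // varpi_neq0.
have vP : v P = (m.+1)%:Z by rewrite hP (vX hv) ?varpi_neq0 //; case: hvarpi => _ ->; rewrite mulr1.
have [u hu] : exists u, u = t / P by eexists.
have huU : unitO u.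
  split; first by rewrite hu mulf_neq0 ?invr_eq0.
  by rewrite hu (vM hv) ?invr_eq0 // vV // hm vP subrr.
have [x [z [hx hz hxz]]] := NA _ huU m.+1.
have [n hn] : exists n, n = x * x - eps * (z * z) by eexists.
rewrite -hn in hxz.
have hnU : unitO n.
  have -> : n = u + (n - u) by rewrite addrC subrK.
  apply: unit_addP => //; apply: vgeW hxz; lia.
have hn0 : n != 0 by case: hnU.
have [ga hga] : exists ga, ga = n / u by eexists.
have hgaU : unitO ga by rewrite hga; apply: unitO_mul => //; apply: unitO_invU.
have hga0 : ga != 0 by case: hgaU.
have hu0 : u != 0 by case: huU.
have [s' hs'] : exists s', s' = (ga - 1) / (eps * P) by eexists.
have hs'O : inO s'.
  have e : s' = (n - u) * u^-1 * (eps * P)^-1 by rewrite hs' hga; field; apply/andP; split => //; apply/andP.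
  have h1 : vge (m.+1%:Z + 0) ((n - u) * u^-1) by apply: vgeM => //; apply: unitO_inv.
  have h3 : vge (- (m.+1%:Z)) ((eps * P)^-1).
    by right; rewrite vV ?mulf_neq0 // (vM hv) // hveps vP add0r.
  have := vgeM hv h1 h3; rewrite e addr0 subrr; done.
exists (RepK m), (mmul (mkM2 (x / n, - z / n) (ezero F) (ezero F) (x, - z)) (Um (0, s'))),
  (mmul (mmul (mmul (Um (0, - s' / ga)) (mkM2 (ga^-1, 0) (ezero F) (ezero F) (ga, 0)))
          (mkM2 (x, z) (ezero F) (ezero F) (x / n, z / n))) U).
have hninv : inO n^-1 by apply: unitO_inv.
split.
- apply: inBB_mul; last exact: inBB_Um.
  apply: inBB_up.
  + by apply: inOEp; apply: inOM => //; apply: inON.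
  + exact: inOE00.
  + by apply: inOEp => //; apply: inON.
  + by split; rewrite /=; rewrite ?hn; try ring; field; move: hn0; rewrite hn.
- apply: inBB_mul => //; apply: inBB_mul; first apply: inBB_mul.
  + by apply: inBB_Um; apply: inOM; [apply: inON|apply: unitO_inv].
  + apply: inBB_up.
    * by apply: inOEp; [apply: unitO_inv|apply: inO0].
    * exact: inOE00.
    * by apply: inOEp; [apply: unitO_inO|apply: inO0].
    * by split; rewrite /=; try ring; field.
  + apply: inBB_up.
    * by apply: inOEp.
    * exact: inOE00.
    * by apply: inOEp; apply: inOM.
    * by split; rewrite /=; rewrite ?hn; try ring; field; move: hn0; rewrite hn.
- have ht' : t / n = P / ga.
    by rewrite hga hu; field; rewrite hP0 tn0 hn0.
  have hg' : ga = 1 + eps * s' * P by rewrite hs'; field; rewrite heps0 hP0.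
  rewrite (LK hn hn0 hg' hga0 ht').
  by rewrite !mmulA hP.
Qed.

Lemma inP_sqdiff x y : inO x -> inO y -> inP (x * x - y * y) -> inP (x - y) \/ inP (x + y).
Proof.
move=> hx hy hp.
case: (inO_cases (inOB hx hy)) => [u1|]; last by left.
case: (inO_cases (inOD hx hy)) => [u2|]; last by right.
exfalso; apply: (unitO_notP (unitO_mul u1 u2)).
by have -> : (x - y) * (x + y) = x * x - y * y by ring.
Qed.

Lemma inP_sq x : inO x -> inP (x * x) -> inP x.
Proof.
move=> hx hp; case: (inO_cases hx) => // u; exfalso.
exact: (unitO_notP (unitO_mul u u)).
Qed.

Definition Pb (x : F) : bool := if excluded_middle_informative (inP x) then true else false.

Lemma PbP x : reflect (inP x) (Pb x).
Proof. by rewrite /Pb; case: excluded_middle_informative => h; constructor. Qed.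

Section Count.
Variable s0 : seq F.
Hypothesis hs0O : forall y, y \in s0 -> inO y.
Hypothesis hs0cov : forall x, inO x -> exists2 y, y \in s0 & inP (x - y).
Hypothesis hs0n : s0 != [::].

Local Notation T := ('I_(size s0).-1.+1).

Lemma size_s0 : (size s0).-1.+1 = size s0.
Proof. by case: s0 hs0n. Qed.

Definition sv (i : T) : F := nth 0 s0 i.

Lemma sv_inO i : inO (sv i).
Proof. apply: hs0O; apply: mem_nth; rewrite -[X in (_ < X)%N]size_s0; exact: ltn_ord. Qed.

Definition cr (x : F) : T := odflt ord0 [pick j : T | Pb (x - sv j)].

Lemma cr_spec x : inO x -> inP (x - sv (cr x)).
Proof.
move=> hx; rewrite /cr; case: pickP => [j /PbP //|none].
exfalso; have [y ys hy] := hs0cov hx.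
have hi : (index y s0 < (size s0).-1.+1)%N by rewrite size_s0 index_mem.
have := none (Ordinal hi); rewrite /sv /= nth_index //.
by move/PbP: hy => ->.
Qed.

Lemma cr_eq x y : inP (x - y) -> cr x = cr y.
Proof.
move=> hp; rewrite /cr; congr odflt; apply: eq_pick => j /=.
apply/PbP/PbP => h.
- have -> : y - sv j = (x - sv j) - (x - y) by ring. by apply: inPB.
- have -> : x - sv j = (x - y) + (y - sv j) by ring. by apply: inPD.
Qed.

Lemma cr_eqP x y : inO x -> inO y -> cr x = cr y -> inP (x - y).
Proof.
move=> hx hy e; have := inPB (cr_spec hx) (cr_spec hy).
by rewrite e; have -> : x - sv (cr y) - (y - sv (cr y)) = x - y by ring.
Qed.

Lemma crK x : inO x -> cr (sv (cr x)) = cr x.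
Proof.
move=> hx; apply: cr_eq.
have -> : sv (cr x) - x = - (x - sv (cr x)) by ring.
by apply: inPN; apply: cr_spec.
Qed.

Definition C : {set T} := [set cr (sv i) | i : T].

Lemma crC x : inO x -> cr x \in C.
Proof. by move=> hx; apply/imsetP; exists (cr x) => //; rewrite crK. Qed.

Lemma C_fix i : i \in C -> cr (sv i) = i.
Proof. by case/imsetP => j _ ->; apply: crK; apply: sv_inO. Qed.

Definition sig i := cr (- sv i).

Lemma count2 (f : T -> T) :
  {in C &, forall i j, f i = f j -> inP (sv i * sv i - sv j * sv j)} ->
  (#|C| + 1 <= 2 * #|f @: C|)%N.
Proof.
move=> hf.
set i0 := cr 0.
have i0C : i0 \in C by apply: crC; apply: inO0.
have hsi0 : inP (sv i0).
  by have := inPN (cr_spec inO0); rewrite sub0r opprK.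
have sig_i0 : sig i0 = i0.
  by apply: cr_eq; rewrite subr0; apply: inPN.
set g := fun i => (f i, (i < sig i)%N).
have ginj : {in C &, injective g}.
  move=> i j iC jC [efij eb].
  have := hf i j iC jC efij; case/(inP_sqdiff (sv_inO i) (sv_inO j)) => hp.
    by rewrite -(C_fix iC) -(C_fix jC); apply: cr_eq.
  have ej : j = sig i.
    rewrite -(C_fix jC) /sig; apply: cr_eq.
    by have -> : sv j - - sv i = sv i + sv j by ring.
  have ei : i = sig j.
    rewrite -(C_fix iC) /sig; apply: cr_eq.
    by have -> : sv i - - sv j = sv i + sv j by ring.
  rewrite -ej -ei in eb.
  apply/val_inj/eqP; move: eb; by case: (ltngtP i j).
have gsub : g @: C \subset (setX (f @: C) [set: bool]) :\ (f i0, true).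
  apply/subsetP => _ /imsetP [i iC ->]; rewrite !inE /= imset_f // andbT.
  rewrite andbT; apply/negP; rewrite /g => /eqP [efi hlt].
  have hp := hf i i0 iC i0C efi.
  have hsq : inP (sv i * sv i).
    have -> : sv i * sv i = (sv i * sv i - sv i0 * sv i0) + sv i0 * sv i0 by ring.
    by apply: inPD => //; apply: inPM => //; apply: sv_inO.
  have hsi := inP_sq (sv_inO i) hsq.
  have ei : i = i0 by rewrite -(C_fix iC); apply: cr_eq; rewrite subr0.
  by move: hlt; rewrite ei sig_i0 ltnn.
have hX : #|setX (f @: C) [set: bool]| = (#|f @: C| * 2)%N by rewrite cardsX cardsT card_bool.
have hmem : (f i0, true) \in setX (f @: C) [set: bool] by rewrite !inE /= imset_f.
have := cardsD1 (f i0, true) (setX (f @: C) [set: bool]).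
rewrite hmem hX => e.
have := subset_leq_card gsub; rewrite (card_in_imset ginj).
move: e; rewrite /nat_of_bool. set a := #|_ :\ _|. set b := #|[set f x | x in C]|. move=> e hle. clearbody a b. move: hle e. generalize #|C|. clear. move=> c. lia.
Qed.

Lemma base_sol u : unitO u -> exists x z, [/\ inO x, inO z & inP (x * x - eps * (z * z) - u)].
Proof.
move=> hu; have huO := unitO_inO hu.
set h := fun i => cr (sv i * sv i).
set k := fun i => cr (u + eps * (sv i * sv i)).
have hOk i : inO (u + eps * (sv i * sv i)).
  by apply: inOD => //; apply: inOM; [apply: inO_eps|apply: inOM; apply: sv_inO].
have hOh i : inO (sv i * sv i) by apply: inOM; apply: sv_inO.
case: (boolP [exists i in C, [exists j in C, h i == k j]]).
  case/exists_inP => i iC /exists_inP [j jC /eqP e].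
  exists (sv i), (sv j); split; try apply: sv_inO.
  have := cr_eqP (hOh i) (hOk j) e.
  by have -> : sv i * sv i - (u + eps * (sv j * sv j)) = sv i * sv i - eps * (sv j * sv j) - u by ring.
move=> hne; exfalso.
have cA : (#|C| + 1 <= 2 * #|h @: C|)%N.
  by apply: count2 => i j _ _ e; apply: cr_eqP.
have cB : (#|C| + 1 <= 2 * #|k @: C|)%N.
  apply: count2 => i j _ _ e; have := cr_eqP (hOk i) (hOk j) e.
  move=> hp; have := inPM hp (unitO_inv (conj heps0 hveps)).
  by have -> : (u + eps * (sv i * sv i) - (u + eps * (sv j * sv j))) * eps^-1 =
     sv i * sv i - sv j * sv j by field.
have disj : (h @: C) :&: (k @: C) = set0.
  apply/setP => a; rewrite !inE; apply/negP => /andP [/imsetP [i iC ->] /imsetP [j jC e]].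
  move/negP: hne; apply; apply/exists_inP; exists i => //; apply/exists_inP; exists j => //.
  by apply/eqP.
have sub : (h @: C) :|: (k @: C) \subset C.
  apply/subsetP => a; rewrite inE => /orP [] /imsetP [i _ ->]; apply: crC => //.
have := subset_leq_card sub; rewrite cardsU disj cards0 subn0.
move: cA cB. set a := #|h @: C|. set b := #|k @: C|. set c := #|C|. clearbody a b c. clear. lia.
Qed.

End Count.

Hypothesis h2P : ~ inP 2.

Lemma unit2 : unitO 2.
Proof.
have h : inO 2 by have -> : (2 : F) = 1 + 1 by []; apply: inOD; apply: inO1.
by case: (inO_cases h) => // /h2P.
Qed.

Lemma liftx u z x0 : unitO x0 -> inO z -> inP (x0 * x0 - eps * (z * z) - u) ->
  forall k : nat, exists x, unitO x /\ vge (k.+1)%:Z (x * x - eps * (z * z) - u).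
Proof.
move=> hx0 hz hp; elim=> [|k [x [hx hr]]]; first by exists x0.
have [r er] : exists r, r = x * x - eps * (z * z) - u by eexists.
rewrite -er in hr.
have hx0' : x != 0 by case: hx.
have [d ed] : exists d, d = r / (2 * x) by eexists.
have hd : vge ((k.+1)%:Z + 0) d.
  by rewrite ed; apply: vgeM => //; apply: unitO_inv; apply: unitO_mul => //; apply: unit2.
rewrite addr0 in hd.
exists (x - d); split.
  by apply: unit_addP => //; apply: inPN; apply: vgeW hd; lia.
have -> : (x - d) * (x - d) - eps * (z * z) - u = d * d.
  rewrite ed; move: er => /eqP; rewrite -subr_eq0 => /eqP er'.
  apply: (lc1 (k := -1) _ er'); field.
  by rewrite hx0' h2.
by apply: vgeW (vgeM hv hd hd); lia.
Qed.

Lemma liftz u x z0 : unitO z0 -> inO x -> inP (x * x - eps * (z0 * z0) - u) ->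
  forall k : nat, exists z, unitO z /\ vge (k.+1)%:Z (x * x - eps * (z * z) - u).
Proof.
move=> hz0 hx hp; elim=> [|k [z [hz hr]]]; first by exists z0.
have [r er] : exists r, r = x * x - eps * (z * z) - u by eexists.
rewrite -er in hr.
have hz0' : z != 0 by case: hz.
have [d ed] : exists d, d = r / (2 * eps * z) by eexists.
have hd : vge ((k.+1)%:Z + 0) d.
  rewrite ed; apply: vgeM => //; apply: unitO_inv; apply: unitO_mul => //.
  by apply: unitO_mul; [apply: unit2|split].
rewrite addr0 in hd.
exists (z + d); split.
  by apply: unit_addP => //; apply: vgeW hd; lia.
have -> : x * x - eps * ((z + d) * (z + d)) - u = (- eps * d) * d.
  rewrite ed; move: er => /eqP; rewrite -subr_eq0 => /eqP er'.
  apply: (lc1 (k := -1) _ er'); field.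
  by rewrite hz0' h2 heps0.
have hed : vge (0 + (k.+1)%:Z) (- eps * d) by apply: vgeM => //; apply: inON; apply: inO_eps.
by apply: vgeW (vgeM hv hed hd); lia.
Qed.

Lemma NA_holds (hres : finite_residue_field v) : NAprop.
Proof.
case: hres => s [hsO hcov].
have hs0O : forall y, y \in (0 :: s) -> inO y.
  by move=> y; rewrite inE => /orP [/eqP ->|/hsO //]; apply: inO0.
have hs0cov : forall x, inO x -> exists2 y, y \in (0 :: s) & inP (x - y).
  by move=> x /hcov [y ys hy]; exists y => //; rewrite inE ys orbT.
have hs0n : (0 :: s) != [::] by [].
move=> u hu k.
have [x0 [z0 [hx0 hz0 hp]]] := base_sol hs0O hs0cov hs0n hu.
case: (inO_cases hx0) => [ux|px].
  have [x [hx hr]] := liftx ux hz0 hp k.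
  exists x, z0; split => //; first exact: unitO_inO.
  by apply: vgeW hr; lia.
case: (inO_cases hz0) => [uz|pz].
  have [z [hz hr]] := liftz uz hx0 hp k.
  exists x0, z; split => //; first exact: unitO_inO.
  by apply: vgeW hr; lia.
exfalso; apply: (unitO_notP hu).
have -> : u = (x0 * x0 - eps * (z0 * z0)) - (x0 * x0 - eps * (z0 * z0) - u) by ring.
apply: inPB => //; apply: inPB; first by apply: inPM.
by apply: inPM'; [apply: inO_eps|apply: inPM].
Qed.

End Main.

Theorem proposition2p2 (F : fieldType) (v : F -> int)
  (hF : nonarch_local_field v) (hodd : odd_residual_char v)
  (varpi : F) (hvarpi : uniformizer v varpi)
  (eps : F) (heps_unit : eps != 0 /\ v eps = 0)
  (heps_nonsq : forall x : F, x * x != eps) :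
  double_coset_reps eps v (rep varpi).
Proof.
case: hF => hv _ hres.
have h2 : (2 : F) != 0 by apply/eqP => e; apply: hodd; rewrite e; left.
case: heps_unit => he0 hve.
split.
- by move=> i; apply: rep_inK.
- move=> g hg; apply: exists_dec => //.
  exact: NA_holds.
- by move=> i j b1 b2 hb1 hb2 e; apply: (rep_unique hv he0 hve h2 hvarpi hb1 hb2 e).
Qed.
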